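(* Let $a>1$ and $b>1$ be integers, let $n=a+b-1$, and consider the 1-connected $(a,b)$-puzzle on $V=\{1,2,\dots,n\}$, i.e. the cycle set consisting of the two cycles $\alpha=(1\ 2\ \dots\ a)$ and $\beta=(a\ a+1\ \dots\ n)$. Its configuration group $H=\langle \alpha,\beta\rangle\le S_n$ is the alternating group $A_n$ if both $a$ and $b$ are odd, and it is the symmetric group $S_n$ otherwise. Moreover, any permutation in $H$ can be generated in $O(n^2)$ shifts; that is, there is an absolute constant $K$ (independent of $a,b$) such that every element of $H$ is a product of at most $Kn^2$ factors, each of which is one of $\alpha,\alpha^{-1},\beta,\beta^{-1}$.
   Context: Permutations are written in cycle notation. Shifting the tokens (one on each vertex of $V$) along a cycle $(v_1\ v_2\ \dots\ v_j)$ in either direction corresponds to applying the permutation $(v_1\ v_2\ \dots\ v_j)$ or its inverse; a ''shift'' is one such application. The configuration group of a cycle set is the subgroup of $S_n$ generated by the permutations corresponding to its cycles. $A_n$ denotes the group of even permutations and $S_n$ the group of all permutations of $\{1,\dots,n\}$. *)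

(* Defs.v *)
From mathcomp Require Import all_boot all_order all_fingroup all_solvable.
Set Implicit Arguments. Unset Strict Implicit. Unset Printing Implicit Defensive.

(* If s is not
   duplicate-free, we take the identity (junk value, never used below). *)
Definition cyc_fun (T : finType) (s : seq T) (x : T) : T :=
  if uniq s then next s x else x.

Lemma cyc_fun_inj (T : finType) (s : seq T) : injective (cyc_fun s).
Proof.
rewrite /cyc_fun; case Us: (uniq s) => x y //.
exact: (can_inj (prev_next Us)).
Qed.

Definition cyc (T : finType) (s : seq T) : {perm T} := perm (@cyc_fun_inj T s).

(* Vertices 1..n are encoded as 0..n-1 : 'I_n, with n = a + b - 1.
   alpha = (1 2 ... a)       ~ cycle on 0, 1, ..., a-1 (increasing order)
   beta  = (a a+1 ... n)     ~ cycle on a-1, a, ..., n-1 (increasing order) *)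
Definition puzzle_alpha (a b : nat) : {perm 'I_(a + b - 1)} :=
  cyc [seq i : 'I_(a + b - 1) <- enum 'I_(a + b - 1) | (i < a)%N].

Definition puzzle_beta (a b : nat) : {perm 'I_(a + b - 1)} :=
  cyc [seq i : 'I_(a + b - 1) <- enum 'I_(a + b - 1) | (a - 1 <= i)%N].

Definition puzzle_group (a b : nat) : {set {perm 'I_(a + b - 1)}} :=
  <<[set puzzle_alpha a b; puzzle_beta a b]>>%g.

Definition puzzle_shifts (a b : nat) : seq {perm 'I_(a + b - 1)} :=
  [:: puzzle_alpha a b; (puzzle_alpha a b)^-1; puzzle_beta a b; (puzzle_beta a b)^-1]%g.

(* Main.v *)
Require Import Defs.
From mathcomp Require Import all_boot all_order all_fingroup all_solvable zify.
Set Implicit Arguments. Unset Strict Implicit. Unset Printing Implicit Defensive.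
Local Open Scope group_scope.

Definition Wd (T : finType) (sh : seq {perm T}) (m : nat) (g : {perm T}) : Prop :=
  exists s : seq {perm T}, [/\ all (fun x => x \in sh) s, (size s <= m)%N & g = \prod_(x <- s) x].

Lemma W_le T sh m m' (g : {perm T}) : (m <= m')%N -> Wd sh m g -> Wd sh m' g.
Proof. move=> le [s [H1 H2 H3]]; exists s; split=> //; exact: leq_trans le. Qed.

Lemma W_1 T sh : Wd sh 0 (1 : {perm T}).
Proof. by exists [::]; rewrite big_nil. Qed.

Lemma W_gen T sh (x : {perm T}) : x \in sh -> Wd sh 1 x.
Proof. by move=> H; exists [:: x]; rewrite big_seq1 /= H. Qed.

Lemma W_mul T sh m k (g h : {perm T}) : Wd sh m g -> Wd sh k h -> Wd sh (m + k) (g * h).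
Proof.
move=> [s [H1 H2 ->]] [t [H4 H5 ->]]; exists (s ++ t); rewrite all_cat H1 H4 size_cat big_cat.
split=> //; exact: leq_add.
Qed.

Lemma W_inv T sh m (g : {perm T}) : (forall x, x \in sh -> x^-1 \in sh) -> Wd sh m g -> Wd sh m g^-1.
Proof.
move=> Hsh [s [H1 H2 ->]]; exists (rev (map (fun x => x^-1) s)); rewrite size_rev size_map; split=> //.
  rewrite all_rev all_map; apply/allP=> x xs /=; apply: Hsh; exact: (allP H1).
elim: s {H1 H2} => [|x s IH]; first by rewrite big_nil invg1.
by rewrite /= rev_cons big_cons invMg IH -cats1 big_cat big_seq1.
Qed.

Lemma W_exp T sh m k (g : {perm T}) : Wd sh m g -> Wd sh (m * k) (g ^+ k).
Proof.
move=> Hg; elim: k => [|k IH]; first by rewrite expg0 muln0; exact: W_1.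
by rewrite expgS mulnS; apply: W_mul.
Qed.
Definition f3 (k v : nat) : nat :=
  if v == k then k.+1 else if v == k.+1 then k.+2 else if v == k.+2 then k else v.
Lemma f3_0 k : f3 k k = k.+1. Proof. by rewrite /f3 eqxx. Qed.
Lemma f3_1 k : f3 k k.+1 = k.+2. Proof. rewrite /f3 eqxx; case: ifP => //; lia. Qed.
Lemma f3_2 k : f3 k k.+2 = k. Proof. rewrite /f3 eqxx; do 2 (case: ifP; first lia); done. Qed.
Lemma f3_out k v : (v < k) || (k.+2 < v) -> f3 k v = v.
Proof. move=> H; rewrite /f3; do 3 (case: ifP; first lia); done. Qed.

Definition Is3 n k (p : {perm 'I_n}) := forall x, nat_of_ord (p x) = f3 k (nat_of_ord x).

Lemma inv_val n (p : {perm 'I_n}) (y : 'I_n) (v : nat) : v < n ->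
  (forall w : 'I_n, nat_of_ord w = v -> nat_of_ord (p w) = nat_of_ord y) -> nat_of_ord (p^-1 y) = v.
Proof.
move=> hv H; have E : p (Ordinal hv) = y by apply: ord_inj; rewrite H.
by rewrite -E permK.
Qed.

Lemma Is3_conj n k k' (p S : {perm 'I_n}) : k.+2 < n -> k'.+2 < n ->
  (forall x : 'I_n, k <= nat_of_ord x <= k.+2 -> nat_of_ord (S x) = nat_of_ord x - k + k') ->
  Is3 k p -> Is3 k' (p ^ S).
Proof.
move=> hk hk' HS Hp x; rewrite conjgE !permM.
set z := S^-1 x.
have xE : x = S z by rewrite /z permKV.
have zE : S^-1 x = z by [].
clearbody z.
case: (boolP (k <= nat_of_ord z <= k.+2)) => hz.
  rewrite xE (HS _ hz) HS; last by rewrite Hp /f3; move: hz; repeat case: ifP => ?; intros; lia.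
  rewrite Hp; move: hz; rewrite /f3; repeat case: ifP => ?; intros; lia.
have pz : p z = z by apply: ord_inj; rewrite Hp f3_out //; lia.
rewrite pz -xE f3_out //.
case: (boolP ((nat_of_ord x < k') || (k'.+2 < nat_of_ord x))) => // hx.
have hv : nat_of_ord x - k' + k < n by lia.
have E : S (Ordinal hv) = x by apply: ord_inj; rewrite HS /=; lia.
have : z = Ordinal hv by rewrite -zE; apply: (canLR (permK S)); rewrite E.
move=> zE2; move: hz; rewrite zE2 /=; lia.
Qed.

Lemma Rpow n (R : {perm 'I_n}) : (forall x : 'I_n, x.+1 < n -> nat_of_ord (R x) = x.+1) ->
  forall s (x : 'I_n), x + s < n -> nat_of_ord ((R ^+ s) x) = x + s.
Proof.
move=> HR; elim=> [|s IH] x hx; first by rewrite expg0 perm1 addn0.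
by rewrite expgSr permM HR IH; lia.
Qed.

Definition D n (R u : {perm 'I_n}) i0 k d :=
  (R ^+ k)^-1 * R ^+ i0 * (u * R^-1) ^+ d * (R ^+ i0)^-1 * R ^+ (k + d).

Lemma D0 n (R u : {perm 'I_n}) i0 k : D R u i0 k 0 = 1.
Proof. by rewrite /D expg0 mulg1 addn0 mulgK mulVg. Qed.

Lemma DS n (R u : {perm 'I_n}) i0 k d :
  D R u i0 k d.+1 = D R u i0 k d * ((u ^ (R ^+ i0)^-1) ^ (R ^+ (k + d))).
Proof.
have C : R^-1 * (R ^+ i0)^-1 * R = (R ^+ i0)^-1.
  have cm : commute ((R ^+ i0)^-1) R.
    apply: commute_sym; apply: commuteV; apply: commuteX; exact: commute_refl.
  by rewrite -mulgA cm mulKg.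
rewrite /D !conjgE invgK addnS expgSr expgS.
rewrite !mulgA. congr (_ * _).
rewrite mulgK mulgKV -!mulgA; do 4 congr (_ * _).
by rewrite !mulgA C.
Qed.

Lemma u0_Is3 n (R u : {perm 'I_n}) i0 : (forall x : 'I_n, x.+1 < n -> nat_of_ord (R x) = x.+1) ->
  i0.+2 < n -> Is3 i0 u -> Is3 0 (u ^ (R ^+ i0)^-1).
Proof.
move=> HR hi Hu; apply: (Is3_conj hi) => //; first lia.
move=> x hx; rewrite addn0; apply: inv_val; first lia.
move=> w hw; rewrite (Rpow HR); lia.
Qed.

Lemma uk_Is3 n (R p : {perm 'I_n}) k : (forall x : 'I_n, x.+1 < n -> nat_of_ord (R x) = x.+1) ->
  2 < n -> k.+2 < n -> Is3 0 p -> Is3 k (p ^ (R ^+ k)).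
Proof.
move=> HR h2 hk Hp; apply: (Is3_conj h2 hk) => //.
move=> x hx; rewrite (Rpow HR); lia.
Qed.

Lemma D_act n (R u : {perm 'I_n}) i0 : (forall x : 'I_n, x.+1 < n -> nat_of_ord (R x) = x.+1) ->
  i0.+2 < n -> Is3 i0 u -> ~~ odd_perm u -> forall k d, k + d + 1 < n ->
  [/\ forall x : 'I_n, nat_of_ord x = k.+1 -> nat_of_ord (D R u i0 k d x) = k.+1 + d,
      forall x : 'I_n, k + d + 1 < x -> D R u i0 k d x = x
    & ~~ odd_perm (D R u i0 k d)].
Proof.
move=> HR hi Hu He k; elim=> [|d IH] hkd.
  by rewrite D0; split=> [x hx|x _|]; rewrite ?perm1 ?addn0 ?odd_perm1.
have [IH1 IH2 IH3] := IH ltac:(lia).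
have H3 : Is3 (k + d) ((u ^ (R ^+ i0)^-1) ^ (R ^+ (k + d))).
  apply: uk_Is3 => //; try lia; exact: u0_Is3.
rewrite DS; split.
- move=> x hx; rewrite permM H3 IH1 // /f3; repeat case: ifP => ?; lia.
- move=> x hx; rewrite permM IH2; last lia.
  apply: ord_inj; rewrite H3 f3_out //; lia.
- by rewrite odd_permM !odd_permJ (negbTE IH3) (negbTE He).
Qed.

Lemma D_cost n sh (R u : {perm 'I_n}) i0 k d :
  (forall x, x \in sh -> x^-1 \in sh) -> Wd sh 2 R -> Wd sh 4 u ->
  Wd sh (2 * k + 2 * i0 + 6 * d + 2 * i0 + 2 * (k + d)) (D R u i0 k d).
Proof.
move=> Hsh WR Wu; rewrite /D.
have WRi := W_inv Hsh WR.
have Wx : Wd sh 6 (u * R^-1) by apply: (W_mul Wu WRi).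
apply: W_mul; last by apply: W_exp.
apply: W_mul; last by apply: W_inv => //; apply: W_exp.
apply: W_mul; last by apply: W_exp.
apply: W_mul; last by apply: W_exp.
by apply: W_inv => //; apply: W_exp.
Qed.

Lemma u0_cost n sh (R u : {perm 'I_n}) i0 :
  (forall x, x \in sh -> x^-1 \in sh) -> Wd sh 2 R -> Wd sh 4 u ->
  Wd sh (2 * i0 + 4 + 2 * i0) (u ^ (R ^+ i0)^-1).
Proof.
move=> Hsh WR Wu; rewrite conjgE invgK ?mulgA.
apply: W_mul; last by apply: W_inv => //; apply: W_exp.
by apply: W_mul => //; apply: W_exp.
Qed.

Lemma chain n sh (R u : {perm 'I_n}) i0 :
  (forall x, x \in sh -> x^-1 \in sh) -> Wd sh 2 R -> Wd sh 4 u ->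
  (forall x : 'I_n, x.+1 < n -> nat_of_ord (R x) = x.+1) ->
  i0.+2 < n -> Is3 i0 u -> ~~ odd_perm u ->
  forall m (y : 'I_n), 2 <= m < n -> y < m ->
  exists P : {perm 'I_n}, [/\ Wd sh (22 * n) P, nat_of_ord (P y) = m,
     (forall x : 'I_n, m < x -> P x = x) & ~~ odd_perm P].
Proof.
move=> Hsh WR Wu HR hi Hu He m y hm hy.
case: (posnP y) => hy0.
  have [A1 A2 A3] := D_act HR hi Hu He (k := 0) (d := m.-1) ltac:(lia).
  have H0 := u0_Is3 HR hi Hu.
  exists ((u ^ (R ^+ i0)^-1) * D R u i0 0 m.-1); split.
  - apply: W_le (W_mul (u0_cost i0 Hsh WR Wu) (D_cost i0 0 m.-1 Hsh WR Wu)); lia.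
  - rewrite permM A1; first lia.
    by rewrite H0 hy0 f3_0.
  - move=> x hx; rewrite permM.
    have -> : (u ^ (R ^+ i0)^-1) x = x by apply: ord_inj; rewrite H0 f3_out //; lia.
    by rewrite A2 //; lia.
  - by rewrite odd_permM odd_permJ (negbTE He) A3.
have [A1 A2 A3] := D_act HR hi Hu He (k := y.-1) (d := m - y) ltac:(lia).
exists (D R u i0 y.-1 (m - y)); split.
- apply: W_le (D_cost i0 y.-1 (m - y) Hsh WR Wu); lia.
- rewrite A1; lia.
- move=> x hx; rewrite A2 //; lia.
- exact: A3.
Qed.

Lemma base_id n (g : {perm 'I_n}) : 2 < n -> ~~ odd_perm g ->
  (forall x : 'I_n, 2 <= x -> g x = x) -> g = 1.
Proof.
move=> hn He Hg.
have small : forall x : 'I_n, x < 2 -> g x < 2.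
  move=> x hx; case: (ltnP (g x) 2) => // h.
  have := Hg _ h => /perm_inj E; move: hx; rewrite -E; lia.
have h0 : 0 < n by lia.
have h1 : 1 < n by lia.
pose x0 := Ordinal h0; pose x1 := Ordinal h1.
have gx0 := small x0 isT; have gx1 := small x1 isT.
have ne : g x0 != g x1 by rewrite (inj_eq perm_inj).
case: (posnP (g x0)) => e0.
  apply/permP => x; rewrite perm1.
  case: (ltnP x 2) => hx; last exact: Hg.
  apply: ord_inj.
  have : nat_of_ord x = 0%N \/ nat_of_ord x = 1%N by lia.
  case=> xv.
    by rewrite -[x](@ord_inj _ x0 x) ?xv // e0.
  rewrite -[x](@ord_inj _ x1 x) ?xv //=.
  move: ne gx1; rewrite -(inj_eq (@ord_inj _)) e0 /=; lia.
have e0' : nat_of_ord (g x0) = 1%N by lia.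
have e1 : nat_of_ord (g x1) = 0%N by move: ne gx1; rewrite -(inj_eq (@ord_inj _)) e0' /=; lia.
have gt : g = tperm x0 x1.
  apply/permP => x.
  case: (ltnP x 2) => hx; last by rewrite Hg // tpermD //; apply/eqP => E; move: hx; rewrite -E /=; lia.
  have : nat_of_ord x = 0%N \/ nat_of_ord x = 1%N by lia.
  case=> xv.
    rewrite -[x](@ord_inj _ x0 x) ?xv // tpermL; apply: ord_inj; by rewrite e0'.
  rewrite -[x](@ord_inj _ x1 x) ?xv // tpermR; apply: ord_inj; by rewrite e1.
by move: He; rewrite gt odd_tperm.
Qed.

Lemma core n sh (R u : {perm 'I_n}) i0 :
  (forall x, x \in sh -> x^-1 \in sh) -> Wd sh 2 R -> Wd sh 4 u ->
  (forall x : 'I_n, x.+1 < n -> nat_of_ord (R x) = x.+1) ->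
  i0.+2 < n -> Is3 i0 u -> ~~ odd_perm u ->
  forall m (g : {perm 'I_n}), ~~ odd_perm g -> (forall x : 'I_n, m <= x -> g x = x) ->
  Wd sh (m * (22 * n)) g.
Proof.
move=> Hsh WR Wu HR hi Hu He; elim=> [|m IH] g Hg Hfix.
  have -> : g = 1 by apply: (base_id _ Hg); [lia | move=> x _; exact: Hfix].
  exact: W_1.
case: (leqP m.+1 2) => hm.
  have -> : g = 1 by apply: (base_id _ Hg); [lia | move=> x hx; apply: Hfix; lia].
  by exists [::]; rewrite big_nil.
case: (leqP n m) => hnm.
  apply: W_le (IH g Hg _); first by rewrite leq_mul2r leqnSn orbT.
  move=> x hx; have := ltn_ord x; lia.
pose xm := Ordinal hnm.
have hy : g xm <= m.
  case: (leqP (g xm) m) => // h.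
  have := Hfix _ h => /perm_inj E; move: h; rewrite E /=; lia.
case: (ltnP (g xm) m) => hy'; last first.
  have gm : g xm = xm by apply: ord_inj => /=; lia.
  apply: W_le (IH g Hg _); first by rewrite leq_mul2r leqnSn orbT.
  move=> x hx; case: (ltnP m x) => hx'; first by apply: Hfix.
  have -> : x = xm by apply: ord_inj => /=; lia.
  exact: gm.
have [P [WP P1 P2 P3]] := chain Hsh WR Wu HR hi Hu He (m := m) (y := g xm) ltac:(lia) hy'.
have Hg' : ~~ odd_perm (g * P) by rewrite odd_permM (negbTE Hg) (negbTE P3).
have Hfix' : forall x : 'I_n, m <= x -> (g * P) x = x.
  move=> x hx; rewrite permM; case: (ltnP m x) => hx'.
    by rewrite Hfix // P2.
  have xE : x = xm by apply: ord_inj => /=; lia.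
  by rewrite xE; apply: ord_inj; rewrite P1.
have := W_mul (IH _ Hg' Hfix') (W_inv Hsh WP).
by rewrite mulgK mulSn addnC.
Qed.
Definition fcyc (l k v : nat) : nat :=
  if (l <= v) && (v < l + k) then v.+1 else if v == l + k then l else v.

Lemma index_iota' l m v : l <= v < l + m -> index v (iota l m) = (v - l)%N.
Proof.
move=> h; have E : nth 0 (iota l m) (v - l) = v by rewrite nth_iota; lia.
by rewrite -{1}E index_uniq ?size_iota ?iota_uniq //; lia.
Qed.

Lemma next_iota l k v : next (iota l k.+1) v = fcyc l k v.
Proof.
rewrite next_nth mem_iota /fcyc.
case: ifP => h; last by repeat case: ifP => ?; intros; lia.
rewrite index_iota' // /=.
case: (ltnP (v - l) k) => h2.
  rewrite nth_iota //; case: ifP => ?; lia.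
rewrite nth_default ?size_iota //; case: ifP => ?; first lia.
case: ifP => ?; lia.
Qed.

Lemma filter_lt_iota a n : a <= n -> [seq i <- iota 0 n | i < a] = iota 0 a.
Proof.
move=> h; rewrite -(subnKC h) iotaD filter_cat.
rewrite (all_filterP _); last by apply/allP => x; rewrite mem_iota; lia.
rewrite (@eq_in_filter _ _ pred0); first by rewrite filter_pred0 cats0.
move=> x; rewrite mem_iota /=; lia.
Qed.

Lemma filter_ge_iota c n : c <= n -> [seq i <- iota 0 n | c <= i] = iota c (n - c).
Proof.
move=> h; rewrite -{1}(subnKC h) iotaD filter_cat.
rewrite (@eq_in_filter _ _ pred0 (iota 0 c)); last by move=> x; rewrite mem_iota /=; lia.
rewrite filter_pred0 /= add0n; apply/all_filterP/allP => x; rewrite mem_iota; lia.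
Qed.

Lemma cyc_val n (P : pred nat) l k (x : 'I_n) :
  [seq i <- iota 0 n | P i] = iota l k.+1 ->
  nat_of_ord (cyc [seq i : 'I_n <- enum 'I_n | P i] x) = fcyc l k x.
Proof.
move=> HP; rewrite /cyc permE /cyc_fun filter_uniq ?enum_uniq //.
rewrite -next_iota -HP -(next_map (@ord_inj n)) ?filter_uniq ?enum_uniq //.
rewrite -filter_map val_enum_ord //; by have := enum_uniq 'I_n; rewrite enumT.
by have := enum_uniq 'I_n; rewrite enumT.
Qed.

Lemma alpha_val a b (x : 'I_(a + b - 1)) : 1 < a -> 1 < b ->
  nat_of_ord (puzzle_alpha a b x) = fcyc 0 (a - 1) x.
Proof.
move=> ha hb; rewrite /puzzle_alpha (@cyc_val _ (fun i => i < a) 0 (a - 1)) // filter_lt_iota; last lia.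
congr iota; lia.
Qed.

Lemma beta_val a b (x : 'I_(a + b - 1)) : 1 < a -> 1 < b ->
  nat_of_ord (puzzle_beta a b x) = fcyc (a - 1) (b - 1) x.
Proof.
move=> ha hb; rewrite /puzzle_beta (@cyc_val _ (fun i => a - 1 <= i) (a - 1) (b - 1)) // filter_ge_iota; last lia.
congr iota; lia.
Qed.

Lemma fcyc_odd n l k (p : {perm 'I_n}) : l + k < n ->
  (forall x : 'I_n, nat_of_ord (p x) = fcyc l k x) -> odd_perm p = odd k.
Proof.
elim: k p => [|k IH] p hlk Hp.
  have -> : p = 1 by apply/permP => x; apply: ord_inj; rewrite perm1 Hp /fcyc; repeat case: ifP => ?; lia.
  by rewrite odd_perm1.
have h1 : l + k < n by lia.
have h2 : (l + k).+1 < n by lia.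
pose y1 := Ordinal h1; pose y2 := Ordinal h2.
have ne : y1 != y2 by apply/eqP => /(congr1 (@nat_of_ord n)) /=; lia.
have H' : forall x : 'I_n, nat_of_ord ((tperm y1 y2 * p) x) = fcyc l k x.
  move=> x; rewrite permM.
  case: (eqVneq x y1) => [->|n1].
    by rewrite tpermL Hp /fcyc /=; repeat case: ifP => ?; lia.
  case: (eqVneq x y2) => [->|n2].
    by rewrite tpermR Hp /fcyc /=; repeat case: ifP => ?; lia.
  rewrite tpermD 1?eq_sym // Hp.
  have : nat_of_ord x != l + k by apply: contra n1 => /eqP E; apply/eqP/ord_inj.
  have : nat_of_ord x != (l + k).+1 by apply: contra n2 => /eqP E; apply/eqP/ord_inj.
  rewrite /fcyc; repeat case: ifP => ?; intros; lia.
have := IH _ h1 H'; rewrite odd_permM odd_tperm ne /=.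
by move=> <-; rewrite negbK.
Qed.

Definition finv (l k w : nat) : nat :=
  if (l < w) && (w <= l + k) then w.-1 else if w == l then l + k else w.

Lemma fcyc_inv n l k (p : {perm 'I_n}) : l + k < n ->
  (forall x : 'I_n, nat_of_ord (p x) = fcyc l k x) ->
  forall y : 'I_n, nat_of_ord (p^-1 y) = finv l k y.
Proof.
move=> hlk Hp y; apply: inv_val.
  have := ltn_ord y; rewrite /finv; repeat case: ifP => ?; intros; lia.
move=> w hw; rewrite Hp; move: hw; have := ltn_ord y.
move: (nat_of_ord w) (nat_of_ord y) => w' y'.
rewrite /finv /fcyc; repeat case: ifP => ?; intros; lia.
Qed.

Lemma puzzle_R a b : 1 < a -> 1 < b ->
  forall x : 'I_(a + b - 1), x.+1 < a + b - 1 ->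
  nat_of_ord ((puzzle_beta a b * puzzle_alpha a b) x) = x.+1.
Proof.
move=> ha hb x hx; rewrite permM alpha_val //.
move: (beta_val x ha hb) hx; move: (nat_of_ord (puzzle_beta a b x)) (nat_of_ord x) => w v.
rewrite /fcyc; repeat case: ifP => ?; intros; lia.
Qed.

Lemma puzzle_u a b : 1 < a -> 1 < b ->
  Is3 (a - 2) (puzzle_alpha a b * (puzzle_beta a b)^-1 * (puzzle_alpha a b)^-1 * puzzle_beta a b).
Proof.
move=> ha hb x.
have hA : 0 + (a - 1) < a + b - 1 by lia.
have hB : a - 1 + (b - 1) < a + b - 1 by lia.
have Ai := fcyc_inv hA (fun x => alpha_val x ha hb).
have Bi := fcyc_inv hB (fun x => beta_val x ha hb).
rewrite !permM beta_val //.
have E1 := alpha_val x ha hb.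
have E2 := Bi (puzzle_alpha a b x).
have E3 := Ai ((puzzle_beta a b)^-1 (puzzle_alpha a b x)).
have := ltn_ord x.
move: E1 E2 E3.
move: (nat_of_ord ((puzzle_alpha a b)^-1 ((puzzle_beta a b)^-1 (puzzle_alpha a b x)))) => w3.
move: (nat_of_ord ((puzzle_beta a b)^-1 (puzzle_alpha a b x))) => w2.
move: (nat_of_ord (puzzle_alpha a b x)) => w1.
move: (nat_of_ord x) => v.
rewrite /f3 /finv /fcyc; repeat case: ifP => ?; intros; lia.
Qed.

Lemma sh_inv a b (x : {perm 'I_(a + b - 1)}) :
  x \in puzzle_shifts a b -> x^-1 \in puzzle_shifts a b.
Proof.
rewrite /puzzle_shifts !inE => /or4P [] /eqP ->; rewrite ?invgK !eqxx ?orbT //.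
Qed.

Lemma W_in a b m (g : {perm 'I_(a + b - 1)}) : Wd (puzzle_shifts a b) m g -> g \in puzzle_group a b.
Proof.
move=> [s [H1 _ ->]]; rewrite big_seq; apply: group_prod => x xs.
have := allP H1 x xs; rewrite /puzzle_shifts /puzzle_group !inE => /or4P [] /eqP ->;
  by rewrite ?groupV mem_gen // !inE eqxx ?orbT.
Qed.

Lemma even_W a b (g : {perm 'I_(a + b - 1)}) : 1 < a -> 1 < b -> ~~ odd_perm g ->
  Wd (puzzle_shifts a b) ((a + b - 1) * (22 * (a + b - 1))) g.
Proof.
move=> ha hb Hg.
have Ha : puzzle_alpha a b \in puzzle_shifts a b by rewrite !inE eqxx.
have Hb : puzzle_beta a b \in puzzle_shifts a b by rewrite !inE eqxx ?orbT.
have Hai : (puzzle_alpha a b)^-1 \in puzzle_shifts a b by exact: sh_inv.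
have Hbi : (puzzle_beta a b)^-1 \in puzzle_shifts a b by exact: sh_inv.
apply: (@core _ _ (puzzle_beta a b * puzzle_alpha a b)
   (puzzle_alpha a b * (puzzle_beta a b)^-1 * (puzzle_alpha a b)^-1 * puzzle_beta a b) (a - 2)).
- exact: sh_inv.
- exact: (W_mul (W_gen Hb) (W_gen Ha)).
- exact: (W_mul (W_mul (W_mul (W_gen Ha) (W_gen Hbi)) (W_gen Hai)) (W_gen Hb)).
- exact: puzzle_R.
- lia.
- exact: puzzle_u.
- by rewrite !odd_permM !odd_permV; case: (odd_perm (puzzle_alpha a b)); case: (odd_perm (puzzle_beta a b)).
- exact: Hg.
- move=> x hx; have := ltn_ord x; lia.
Qed.

Lemma alpha_odd a b : 1 < a -> 1 < b -> odd_perm (puzzle_alpha a b) = odd (a - 1).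
Proof. move=> ha hb; apply: (@fcyc_odd _ 0) => [|x]; [lia | exact: alpha_val]. Qed.

Lemma beta_odd a b : 1 < a -> 1 < b -> odd_perm (puzzle_beta a b) = odd (b - 1).
Proof. move=> ha hb; apply: (@fcyc_odd _ (a - 1)) => [|x]; [lia | exact: beta_val]. Qed.

Lemma H_sub_Alt a b : ~~ odd_perm (puzzle_alpha a b) -> ~~ odd_perm (puzzle_beta a b) ->
  puzzle_group a b \subset 'Alt_('I_(a + b - 1)).
Proof.
move=> Ha Hb; rewrite /puzzle_group gen_subG subUset !sub1set !Alt_even Ha Hb.
done.
Qed.

Lemma odd_split a b (g : {perm 'I_(a + b - 1)}) : odd_perm g ->
  odd_perm (puzzle_alpha a b) || odd_perm (puzzle_beta a b) ->
  exists2 p, p \in puzzle_shifts a b & ~~ odd_perm (p^-1 * g).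
Proof.
move=> Hg /orP [H|H].
  by exists (puzzle_alpha a b); rewrite ?inE ?eqxx // odd_permM odd_permV H Hg.
by exists (puzzle_beta a b); rewrite ?inE ?eqxx ?orbT // odd_permM odd_permV H Hg.
Qed.

Local Close Scope group_scope.
Theorem theorem1 :
  (forall a b : nat, 1 < a -> 1 < b ->
     (odd a && odd b -> puzzle_group a b = ('Alt_('I_(a + b - 1)))%g) /\
     (~~ (odd a && odd b) -> puzzle_group a b = ('Sym_('I_(a + b - 1)))%g)) /\
  (exists K : nat, forall a b : nat, 1 < a -> 1 < b ->
     forall g, g \in puzzle_group a b ->
       exists s : seq {perm 'I_(a + b - 1)},
         [/\ all (fun x => x \in puzzle_shifts a b) s,
             size s <= K * (a + b - 1) ^ 2
           & g = (\prod_(x <- s) x)%g]).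
Proof.
split.
  move=> a b ha hb; split.
    move=> /andP [oa ob]; apply/eqP; rewrite eqEsubset; apply/andP; split.
      by apply: H_sub_Alt; rewrite ?alpha_odd ?beta_odd //; lia.
    apply/subsetP => g; rewrite Alt_even => Hg; exact: W_in (even_W ha hb Hg).
  move=> nodd; apply/eqP; rewrite eqEsubset; apply/andP; split.
    by apply/subsetP => g _; rewrite inE.
  apply/subsetP => g _.
  case: (boolP (odd_perm g)) => Hg; last exact: W_in (even_W ha hb Hg).
  have [p ps Hp] : exists2 p, p \in puzzle_shifts a b & ~~ odd_perm (p^-1 * g)%g.
    apply: odd_split => //; rewrite alpha_odd ?beta_odd //.
    have oa : odd (a - 1) = ~~ odd a by rewrite -{2}(subnK (ltnW ha)) addn1 /= negbK.
    have ob : odd (b - 1) = ~~ odd b by rewrite -{2}(subnK (ltnW hb)) addn1 /= negbK.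
    by rewrite oa ob -negb_and.
  have -> : g = (p * (p^-1 * g))%g by rewrite mulKVg.
  exact: W_in (W_mul (W_gen ps) (even_W ha hb Hp)).
exists 23 => a b ha hb g gH.
case: (boolP (odd_perm g)) => Hg; last first.
  apply: (W_le _ (even_W ha hb Hg)); lia.
have [p ps Hp] : exists2 p, p \in puzzle_shifts a b & ~~ odd_perm (p^-1 * g)%g.
  apply: odd_split => //; case: (boolP (_ || _)) => // /norP [Ha Hb].
  by move: (subsetP (H_sub_Alt Ha Hb) g gH); rewrite Alt_even Hg.
have -> : g = (p * (p^-1 * g))%g by rewrite mulKVg.
apply: (W_le _ (W_mul (W_gen ps) (even_W ha hb Hp))); lia.
Qed.
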